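(* Let $\mathbb F$ be a field and let $D$ be an $m\times m$ differential matrix over $\mathbb F$. Then there exist an almost-Jordan differential matrix $\underline D$ and a triangular matrix $B$ (both $m\times m$ over $\mathbb F$) such that $D = B\,\underline D\,B^{-1}$.
   Context: A differential matrix is a square matrix $D$ with $D^2=0$. A differential matrix is Jordan if it is block-diagonal with every diagonal block equal to either the $1\times 1$ zero matrix $J=[0]$ or the $2\times 2$ matrix $K=\begin{bmatrix}0&1\\0&0\end{bmatrix}$. A differential matrix $\underline D$ is almost-Jordan if there is a permutation matrix $P$ such that $P^{-1}\underline D P$ is Jordan. A square matrix is called triangular if it is upper-triangular and invertible. *)

(* Defs.v *)
From HB Require Import structures.
From mathcomp Require Import all_boot all_order all_algebra all_fingroup.
Set Implicit Arguments. Unset Strict Implicit. Unset Printing Implicit Defensive.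
Import GRing.Theory.
Local Open Scope ring_scope.

Definition differential (F : fieldType) (m : nat) (D : 'M[F]_m) : Prop :=
  D *m D = 0.

(* The block-diagonal matrix with diagonal blocks given by the sequence of
   block sizes [s] (each block size is 1 for J = [0], or 2 for
   K = [[0,1],[0,0]]). *)
Definition jordan_of (F : fieldType) (m : nat) (s : seq nat) : 'M[F]_m :=
  \matrix_(i < m, j < m)
    (if [exists k : 'I_(size s),
           [&& nth 0%N s k == 2%N, sumn (take k s) == i & j == i.+1 :> nat]]
     then 1 else 0).

Definition jordan (F : fieldType) (m : nat) (D : 'M[F]_m) : Prop :=
  exists s : seq nat,
    [/\ all (fun b => (b == 1%N) || (b == 2%N)) s, sumn s = m & D = jordan_of F m s].

Definition almost_jordan (F : fieldType) (m : nat) (D : 'M[F]_m) : Prop :=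
  exists sigma : 'S_m, jordan (invmx (perm_mx sigma) *m D *m perm_mx sigma).

Definition triangular (F : fieldType) (m : nat) (B : 'M[F]_m) : Prop :=
  (forall i j : 'I_m, (j < i)%N -> B i j = 0) /\ B \in unitmx.

(* Main.v *)
Require Import Defs.
From mathcomp Require Import all_boot all_order all_algebra all_fingroup.
Set Implicit Arguments. Unset Strict Implicit. Unset Printing Implicit Defensive.
Import GRing.Theory.
Local Open Scope ring_scope.

Definition UT (F : fieldType) m (B : 'M[F]_m) :=
  (forall i j : 'I_m, (j < i)%N -> B i j = 0) /\ (forall i, B i i != 0).

Definition Mf (F : fieldType) m (f : 'I_m -> option 'I_m) : 'M[F]_m :=
  \matrix_(i, j) if f j == Some i then 1 else 0.

Definition matching m (f : 'I_m -> option 'I_m) :=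
  (forall j a, f j = Some a -> f a = None) /\
  (forall i j a, f i = Some a -> f j = Some a -> i = j).

Lemma sum_indr (F : fieldType) n (G : 'I_n -> F) k :
  \sum_l G l * (l == k)%:R = G k.
Proof.
rewrite (bigD1 k) //= eqxx mulr1 big1 ?addr0 // => l /negbTE ->; by rewrite mulr0.
Qed.

Lemma sum_indl (F : fieldType) n (G : 'I_n -> F) k :
  \sum_l (k == l)%:R * G l = G k.
Proof.
rewrite (bigD1 k) //= eqxx mul1r big1 ?addr0 // => l; rewrite eq_sym => /negbTE ->; by rewrite mul0r.
Qed.

Lemma UT_mul (F : fieldType) m (A B : 'M[F]_m) : UT A -> UT B -> UT (A *m B).
Proof.
move=> [A1 A2] [B1 B2]; split.
  move=> i j ji; rewrite mxE big1 // => l _.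
  case: (ltnP l i) => li; first by rewrite A1 // mul0r.
  by rewrite B1 ?mulr0 // (leq_trans ji li).
move=> i; rewrite mxE (bigD1 i) //= big1 ?addr0 ?mulf_neq0 //.
move=> l /negbTE nli; case: (ltngtP l i) => li; first by rewrite A1 // mul0r.
  by rewrite B1 // mulr0.
by move: nli; rewrite (val_inj li) eqxx.
Qed.

Lemma UT_unit (F : fieldType) m (B : 'M[F]_m) : UT B -> B \in unitmx.
Proof.
move=> [B1 B2]; rewrite unitmxE -det_tr det_trig.
  by rewrite unitfE; apply/prodf_neq0 => i _; rewrite mxE.
by apply/is_trig_mxP => i j ij; rewrite mxE B1.
Qed.

Lemma UT1 (F : fieldType) m : UT (1%:M : 'M[F]_m).
Proof.
split=> [i j ji|i]; rewrite mxE; last by rewrite eqxx oner_neq0.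
by case: eqP ji => // ->; rewrite ltnn.
Qed.

Lemma Mf_sq (F : fieldType) m (f : 'I_m -> option 'I_m) :
  matching f -> Mf F f *m Mf F f = 0.
Proof.
move=> [P2 _]; apply/matrixP => i j; rewrite !mxE big1 // => l _; rewrite !mxE.
case: eqP => [fl|]; last by rewrite mul0r.
case: eqP => [fj|]; last by rewrite mulr0.
by move: (P2 _ _ fj); rewrite fl.
Qed.

Definition ins (F : fieldType) n (t : 'I_n.+1) (B : 'M[F]_n) : 'M[F]_n.+1 :=
  \matrix_(i, j) match unlift t i, unlift t j with
                 | Some i', Some j' => B i' j' | _, _ => (i == j)%:R end.

Definition insf n (t : 'I_n.+1) (f : 'I_n -> option 'I_n) : 'I_n.+1 -> option 'I_n.+1 :=
  fun j => if unlift t j is Some j' then omap (lift t) (f j') else None.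

Definition NN (F : fieldType) m (f : 'I_m -> option 'I_m) (t : 'I_m) (w : 'I_m -> F) : 'M[F]_m :=
  \matrix_(i, j) if i == t then w j else Mf F f i j.

Lemma insE_ll (F : fieldType) n t (B : 'M[F]_n) i j : ins t B (lift t i) (lift t j) = B i j.
Proof. by rewrite mxE !liftK. Qed.
Lemma insE_tl (F : fieldType) n t (B : 'M[F]_n) j : ins t B t (lift t j) = 0.
Proof. by rewrite mxE unlift_none (negbTE (neq_lift _ _)). Qed.
Lemma insE_lt (F : fieldType) n t (B : 'M[F]_n) j : ins t B (lift t j) t = 0.
Proof. by rewrite mxE unlift_none liftK eq_sym (negbTE (neq_lift _ _)). Qed.
Lemma insE_tt (F : fieldType) n t (B : 'M[F]_n) : ins t B t t = 1.
Proof. by rewrite mxE unlift_none eqxx. Qed.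

Lemma insf_t n t (f : 'I_n -> option 'I_n) : insf t f t = None.
Proof. by rewrite /insf unlift_none. Qed.
Lemma insf_l n t (f : 'I_n -> option 'I_n) j : insf t f (lift t j) = omap (lift t) (f j).
Proof. by rewrite /insf liftK. Qed.

Lemma insf_nt n t (f : 'I_n -> option 'I_n) j : insf t f j != Some t.
Proof.
rewrite /insf; case: unliftP => [j'|] _ //; case: (f j') => //= a.
by apply/eqP => -[] /eqP; rewrite eq_sym (negbTE (neq_lift _ _)).
Qed.

Lemma insf_matching n t (f : 'I_n -> option 'I_n) : matching f -> matching (insf t f).
Proof.
move=> [P2 P3]; split.
  move=> j a; case: (unliftP t j) => [j'|] -> ; rewrite ?insf_t // insf_l.
  case fj: (f j') => [a'|] //= [<-]; by rewrite insf_l (P2 _ _ fj).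
move=> i j a; case: (unliftP t i) => [i'|] ->; rewrite ?insf_t // insf_l.
case: (unliftP t j) => [j'|] ->; rewrite ?insf_t // insf_l.
case fi: (f i') => [b|] //=; case fj: (f j') => [c|] //= [<-] /Some_inj/lift_inj eb.
by rewrite (P3 _ _ _ fi (etrans fj (congr1 Some eb))).
Qed.

Lemma Mf_insf_ll (F : fieldType) n t (f : 'I_n -> option 'I_n) i j :
  Mf F (insf t f) (lift t i) (lift t j) = Mf F f i j.
Proof.
rewrite !mxE insf_l; case: (f j) => [a|] //=.
by rewrite (inj_eq (@Some_inj _)) (inj_eq lift_inj).
Qed.
Lemma Mf_insf_xt (F : fieldType) n t (f : 'I_n -> option 'I_n) i :
  Mf F (insf t f) i t = 0.
Proof. by rewrite !mxE insf_t. Qed.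
Lemma Mf_tx (F : fieldType) m (f : 'I_m -> option 'I_m) t j :
  (forall j, f j != Some t) -> Mf F f t j = 0.
Proof. by move=> H; rewrite mxE (negbTE (H j)). Qed.

Lemma UT_ins (F : fieldType) n t (B : 'M[F]_n) : UT B -> UT (ins t B).
Proof.
move=> [B1 B2]; split.
  move=> i j; case: (unliftP t i) => [i'|] ->; case: (unliftP t j) => [j'|] ->;
    rewrite ?insE_ll ?insE_tl ?insE_lt ?ltnn //=.
  by rewrite ltnNge leq_bump2 -ltnNge => /B1.
move=> i; case: (unliftP t i) => [i'|] ->; rewrite ?insE_ll ?insE_tt ?oner_neq0 //.
Qed.

Lemma sum_indl' (F : fieldType) n (G : 'I_n -> F) k :
  \sum_l G l * (if k == l then 1 else 0) = G k.
Proof.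
rewrite (bigD1 k) //= eqxx mulr1 big1 ?addr0 // => l; rewrite eq_sym => /negbTE ->; by rewrite mulr0.
Qed.

Lemma quot (F : fieldType) n (t : 'I_n.+1) (D : 'M[F]_n.+1) :
  D *m D = 0 -> (forall i, D i t = 0) ->
  (forall D' : 'M[F]_n, D' *m D' = 0 ->
      exists B f, [/\ UT B, matching f & D' *m B = B *m Mf F f]) ->
  exists B0 f0 (w : 'I_n.+1 -> F), [/\ UT B0 /\ (forall l, B0 l t = (l == t)%:R), matching f0,
     f0 t = None /\ (forall j, f0 j != Some t),
     w t = 0 /\ (forall j a, f0 j = Some a -> w a = 0) & D *m B0 = B0 *m NN f0 t w].
Proof.
move=> DD Dt IH.
pose D' : 'M[F]_n := \matrix_(i, j) D (lift t i) (lift t j).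
have D'D' : D' *m D' = 0.
  apply/matrixP => i j; have := congr1 (fun M : 'M_n.+1 => M (lift t i) (lift t j)) DD.
  rewrite !mxE (bigD1_ord t) //= Dt mul0r add0r => E; rewrite -[RHS]E.
  by apply: eq_bigr => l _; rewrite !mxE.
have [B' [f' [UB' mf' eB']]] := IH _ D'D'.
pose B0 := ins t B'; pose f0 := insf t f'.
pose w := fun j => (D *m B0) t j.
have UB0 : UT B0 by exact: UT_ins.
have mf0 : matching f0 by exact: insf_matching.
have wt : w t = 0.
  rewrite /w mxE (bigD1_ord t) //= /B0 insE_tt mulr1 Dt add0r big1 // => l _.
  by rewrite insE_lt mulr0.
have liftt : forall l, (lift t l == t) = false.
  by move=> l; rewrite eq_sym (negbTE (neq_lift _ _)).
have eq0 : D *m B0 = B0 *m NN f0 t w.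
  apply/matrixP => i j; case: (unliftP t i) => [i'|] ->.
    rewrite !mxE !(bigD1_ord t) //= Dt mul0r add0r insE_lt mul0r add0r.
    case: (unliftP t j) => [j'|] ->.
      have := congr1 (fun M : 'M_n => M i' j') eB'; rewrite !mxE => E.
      transitivity (\sum_l D' i' l * B' l j').
        by apply: eq_bigr => l _; rewrite insE_ll mxE.
      rewrite E; apply: eq_bigr => l _.
      by rewrite insE_ll mxE [NN _ _ _ _ _]mxE liftt Mf_insf_ll mxE.
    rewrite big1; last by move=> l _; rewrite insE_lt mulr0.
    by rewrite big1 // => l _; rewrite [NN _ _ _ _ _]mxE liftt Mf_insf_xt mulr0.
  rewrite [RHS]mxE (bigD1_ord t) //= insE_tt mul1r [NN _ _ _ _ _]mxE eqxx big1 ?addr0 //.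
  by move=> l _; rewrite insE_tl mul0r.
have NNsq : NN f0 t w *m NN f0 t w = 0.
  have UnB0 := UT_unit UB0.
  have H : B0 *m (NN f0 t w *m NN f0 t w) = 0.
    by rewrite mulmxA -eq0 -mulmxA -eq0 mulmxA DD mul0mx.
  by rewrite -[LHS](mulKmx UnB0) H mulmx0.
exists B0, f0, w; split => //.
    split => // l; case: (unliftP t l) => [l'|] ->; rewrite ?insE_lt ?insE_tt ?liftt ?eqxx //.
  by split; [exact: insf_t | exact: insf_nt].
split => // j a fj; have := congr1 (fun M : 'M_n.+1 => M t j) NNsq; rewrite mxE [X in _ = X -> _]mxE => S.
rewrite -[RHS]S -(sum_indl' w a); apply: eq_bigr => l _.
rewrite !mxE eqxx; case: (l =P t) => [->|_]; first by rewrite wt !mul0r.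
by rewrite fj (inj_eq (@Some_inj _)).
Qed.

Lemma sum_Mf (F : fieldType) m (f : 'I_m -> option 'I_m) (y : 'I_m -> F) j :
  \sum_l y l * Mf F f l j = oapp y 0 (f j).
Proof.
case fj: (f j) => [a|] /=.
  rewrite -(sum_indl' y a); apply: eq_bigr => l _; rewrite mxE fj.
  by rewrite (inj_eq (@Some_inj _)).
by rewrite big1 // => l _; rewrite mxE fj mulr0.
Qed.

Lemma mulE1 (F : fieldType) m (A : 'M[F]_m) (k : 'I_m) (y : 'I_m -> F) i j :
  (A *m (1%:M + \matrix_(i, j) ((i == k)%:R * y j))) i j = A i j + A i k * y j.
Proof.
rewrite mulmxDr mulmx1 mxE; congr (_ + _); rewrite mxE.
rewrite (bigD1 k) //= mxE eqxx mul1r big1 ?addr0 // => l /negbTE nlk.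
by rewrite mxE nlk mul0r mulr0.
Qed.

Lemma E1mul (F : fieldType) m (A : 'M[F]_m) (k : 'I_m) (y : 'I_m -> F) i j :
  ((1%:M + \matrix_(i, j) ((i == k)%:R * y j)) *m A) i j =
  A i j + (i == k)%:R * \sum_l y l * A l j.
Proof.
rewrite mulmxDl mul1mx mxE; congr (_ + _); rewrite mxE big_distrr /=.
by apply: eq_bigr => l _; rewrite mxE mulrA.
Qed.

Lemma fix2 (F : fieldType) m (f0 : 'I_m -> option 'I_m) (t j0 : 'I_m) (w : 'I_m -> F) :
  matching f0 -> f0 t = None -> (forall j, f0 j != Some t) -> w t = 0 ->
  (forall j a, f0 j = Some a -> w a = 0) -> w j0 != 0 ->
  (forall k : 'I_m, (k < j0)%N -> w k = 0) -> f0 j0 = None ->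
  exists E f, [/\ UT E, matching f & NN f0 t w *m E = E *m Mf F f].
Proof.
move=> [P2 P3] f0t nt wt wtg wj0 wmin f0j0.
have tj0 : t != j0 by apply: contraNneq wj0 => <-; rewrite wt.
have ntg0 : forall j, f0 j != Some j0.
  by move=> j; apply/eqP => fj; move: wj0; rewrite (wtg _ _ fj) eqxx.
pose y := fun j => ((j == j0)%:R - w j) / w j0.
pose E := (1%:M + \matrix_(i, j) ((i == j0)%:R * y j)) : 'M[F]_m.
pose f := fun j => if j == j0 then Some t else f0 j.
exists E, f; split.
- split.
    move=> i j ji; rewrite /E !mxE.
    have -> : (i == j) = false by apply/negbTE; apply: contraTneq ji => ->; rewrite ltnn.
    case: (i =P j0) => [ij0|]; last by rewrite mul0r addr0.
    rewrite /y wmin -?ij0 //.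
    have -> : (j == i) = false by apply/negbTE; apply: contraTneq ji => ->; rewrite ltnn.
    by rewrite subr0 mul0r mulr0 add0r.
  move=> i; rewrite /E !mxE eqxx; case: (i =P j0) => [->|_]; last by rewrite mul0r addr0 oner_neq0.
  by rewrite /y eqxx mul1r mulrBl divff // mul1r addrC subrK invr_eq0.
- split.
    move=> j a; rewrite /f; case: (j =P j0) => _.
      by move=> [<-]; rewrite (negbTE tj0).
    move=> fj; have aj0 : (a == j0) = false.
      by apply/negbTE; apply: contra_neq (ntg0 j) => <-; rewrite fj.
    by rewrite aj0 (P2 _ _ fj).
  move=> i j a; rewrite /f; case: (i =P j0) => [->|_]; case: (j =P j0) => [->|_] //.
  + by move=> [<-] fj; move: (nt j); rewrite fj eqxx.
  + by move=> fi [ea]; move: (nt i); rewrite fi ea eqxx.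
  + exact: P3.
- apply/matrixP => i j; rewrite mulE1 E1mul sum_Mf.
  rewrite !mxE /f; case: (i =P t) => [->|nit].
    rewrite (negbTE tj0) mul0r addr0 /y.
    case: (j =P j0) => [->|njj0]; first by rewrite eqxx mulrCA divff ?mulr1 // addrC subrK.
    rewrite (negbTE (nt j)) mulrCA divff // mulr1 addrC subrK //.
  rewrite f0j0 mul0r addr0.
  case: (j =P j0) => [->|njj0].
    rewrite /= /y (negbTE tj0) wt subr0 mul0r mulr0 addr0 f0j0.
    rewrite /= (inj_eq (@Some_inj _)); by case: (t =P i) => // ti; case: nit.
  case fj: (f0 j) => [a|] /=; last by rewrite mulr0 addr0.
  have aj0 : (a == j0) = false.
    by apply/negbTE; apply: contra_neq (ntg0 j) => <-; rewrite fj.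
  by rewrite /y aj0 (wtg _ _ fj) subr0 mul0r mulr0 addr0.
Qed.

Lemma fix1 (F : fieldType) m (f0 : 'I_m -> option 'I_m) (t : 'I_m) (w : 'I_m -> F) :
  matching f0 -> f0 t = None -> (forall j, f0 j != Some t) -> w t = 0 ->
  (forall k : 'I_m, (t <= k)%N) ->
  exists E, UT E /\
    NN f0 t w *m E = E *m NN f0 t (fun j => if f0 j is Some _ then 0 else w j).
Proof.
move=> [P2 P3] f0t nt wt ht.
pose x := fun j => \sum_l Mf F f0 j l * w l.
have xt : x t = 0 by rewrite /x big1 // => l _; rewrite Mf_tx // mul0r.
pose E := (1%:M + \matrix_(i, j) ((i == t)%:R * x j)) : 'M[F]_m.
exists E; split.
  split.
    move=> i j ji; rewrite /E !mxE.
    have -> : (i == j) = false by apply/negbTE; apply: contraTneq ji => ->; rewrite ltnn.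
    case: (i =P t) => [it|]; last by rewrite mul0r addr0.
    by move: (ht j); rewrite -it leqNgt ji.
  move=> i; rewrite /E !mxE eqxx; case: (i =P t) => [->|_]; last by rewrite mul0r addr0 oner_neq0.
  by rewrite xt mulr0 addr0 oner_neq0.
apply/matrixP => i j; rewrite mulE1 E1mul.
have Nit : NN f0 t w i t = 0.
  by rewrite mxE; case: eqP => _; rewrite ?wt // mxE f0t.
rewrite Nit mul0r addr0.
case: (i =P t) => [->|nit]; last by rewrite mul0r addr0 !mxE; case: (i =P t).
rewrite mul1r.
rewrite (eq_bigr (fun l => x l * Mf F f0 l j)); last first.
  move=> l _; rewrite mxE; case: (l =P t) => [->|//]; by rewrite xt !mul0r.
rewrite sum_Mf !mxE eqxx.
case fj: (f0 j) => [a|] /=; last by rewrite addr0.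
rewrite add0r /x (bigD1 j) //= mxE fj eqxx mul1r big1 ?addr0 // => l nlj.
rewrite mxE; case: (f0 l =P Some a) => [fl|]; last by rewrite mul0r.
by move: nlj; rewrite (P3 _ _ _ fl fj) eqxx.
Qed.

Lemma finish (F : fieldType) m (D B0 : 'M[F]_m) f0 t (w : 'I_m -> F) :
  UT B0 -> matching f0 -> f0 t = None -> (forall j, f0 j != Some t) -> w t = 0 ->
  (forall j a, f0 j = Some a -> w a = 0) ->
  (forall j, w j != 0 -> (forall k : 'I_m, (k < j)%N -> w k = 0) -> f0 j = None) ->
  D *m B0 = B0 *m NN f0 t w ->
  exists B f, [/\ UT B, matching f & D *m B = B *m Mf F f].
Proof.
move=> UB0 mf0 f0t nt wt wtg wmin eq0.
case: (pickP (fun j => w j != 0)) => [j1 wj1 | w0].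
  case: (@arg_minnP _ j1 (fun j => w j != 0) val wj1) => j0 wj0 minj0.
  have wm : forall k : 'I_m, (k < j0)%N -> w k = 0.
    move=> k kj0; apply/eqP; apply: contraTT kj0 => wk; rewrite -leqNgt; exact: minj0.
  have [E [f [UE mf eE]]] := fix2 mf0 f0t nt wt wtg wj0 wm (wmin _ wj0 wm).
  exists (B0 *m E), f; split => //; first exact: UT_mul.
  by rewrite mulmxA eq0 -mulmxA eE mulmxA.
exists B0, f0; split => //; rewrite eq0; congr (_ *m _).
apply/matrixP => i j; rewrite mxE; case: (i =P t) => [->|//].
by rewrite Mf_tx //; move: (w0 j) => /= /negbFE/eqP.
Qed.

Lemma main_ex (F : fieldType) m (D : 'M[F]_m) : D *m D = 0 ->
  exists B f, [/\ UT B, matching f & D *m B = B *m Mf F f].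
Proof.
elim: m D => [|n IH] D DD.
  exists 1%:M, (fun _ => None); split; [exact: UT1| by split | by apply/matrixP => [[]]].
case: (boolP [forall i, D i ord0 == 0]) => [/forallP H | /forallPn [a0 Ha0]].
  have [B0 [f0 [w [[UB0 _] mf0 [f0t nt] [wt wtg] eq0]]]] := quot DD (fun i => eqP (H i)) IH.
  have [E [UE eE]] := fix1 mf0 f0t nt wt (fun k => leq0n k).
  have [P2 P3] := mf0.
  apply: (@finish _ _ D (B0 *m E) f0 ord0 (fun j => if f0 j is Some _ then 0 else w j)); rewrite ?f0t //.
  - exact: UT_mul.
  - by move=> j a fj; rewrite (P2 _ _ fj) (wtg _ _ fj).
  - by move=> j; case: (f0 j); rewrite ?eqxx.
  - by rewrite mulmxA eq0 -mulmxA eE mulmxA.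
case: (@arg_maxnP _ a0 (fun i => D i ord0 != 0) val Ha0) => a Da maxa.
have Dgt : forall i : 'I_n.+1, (a < i)%N -> D i ord0 = 0.
  move=> i ai; apply/eqP; apply: contraTT ai => Di; rewrite -leqNgt; exact: maxa.
have pos : forall l : 'I_n.+1, l != ord0 -> (0 < l)%N.
  move=> l; rewrite lt0n; apply: contra => /eqP l0; apply/eqP/val_inj.
  exact: l0.
have a0n : a != ord0.
  apply/eqP => ea; move: Da; rewrite ea => D00.
  have := congr1 (fun M : 'M_n.+1 => M ord0 ord0) DD.
  rewrite mxE [X in _ = X -> _]mxE (bigD1 ord0) //= big1 ?addr0.
    by move/eqP; rewrite mulf_eq0 orbb (negbTE D00).
  by move=> l l0; rewrite Dgt ?mulr0 // ea; apply: pos.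
pose E : 'M[F]_n.+1 := \matrix_(i, j) if j == a then D i ord0 else (i == j)%:R.
have UE : UT E.
  split.
    move=> i j ji; rewrite mxE; case: (j =P a) => [ja|_].
      by rewrite Dgt // -ja.
    have -> // : (i == j) = false.
    by apply/negbTE; apply: contraTneq ji => ->; rewrite ltnn.
  move=> i; rewrite mxE; case: (i =P a) => [->|_] //; by rewrite eqxx oner_neq0.
have UnE := UT_unit UE.
pose D1 := invmx E *m D *m E.
have eD1 : D *m E = E *m D1 by rewrite /D1 !mulmxA mulmxV // mul1mx.
have D1D1 : D1 *m D1 = 0.
  by rewrite /D1 !mulmxA mulmxK // -(mulmxA (invmx E) D D) DD mulmx0 mul0mx.
have ec : E *m col ord0 D1 = E *m delta_mx a ord0.
  apply/matrixP => i k; rewrite (ord1 k).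
  transitivity ((E *m D1) i ord0); first by rewrite mxE [RHS]mxE; apply: eq_bigr => l _; congr (_ * _); rewrite mxE.
  have n0a : (ord0 == a) = false by rewrite eq_sym (negbTE a0n).
  have Ecol0 : forall l, E l ord0 = (l == ord0)%:R by move=> l; rewrite mxE n0a.
  rewrite -eD1 mxE; under eq_bigr do rewrite Ecol0; rewrite sum_indr.
  rewrite mxE (bigD1 a) //= [delta_mx _ _ _ _]mxE !eqxx mulr1 big1 ?addr0.
    by rewrite mxE eqxx.
  by move=> l /negbTE la; rewrite [delta_mx _ _ _ _]mxE la mulr0.
have col0 : forall l, D1 l ord0 = (l == a)%:R.
  move=> l; have : col ord0 D1 = delta_mx a ord0.
    by rewrite -[LHS](mulKmx UnE) ec mulKmx.
  move/matrixP/(_ l 0); rewrite [col _ _ _ _]mxE => ->.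
  by rewrite mxE andbT.
have Da1 : forall i, D1 i a = 0.
  move=> i; have := congr1 (fun M : 'M_n.+1 => M i ord0) D1D1.
  rewrite mxE [X in _ = X -> _]mxE => S; rewrite -[RHS]S.
  by under eq_bigr do rewrite col0; rewrite sum_indr.
have [B0 [f0 [w [[UB0 B0a] mf0 [f0t nt] [wt wtg] eq0]]]] := quot D1D1 Da1 IH.
pose c := B0 ord0 ord0.
have c0 : c != 0 by case: UB0 => _ /(_ ord0).
pose v : 'cV[F]_n.+1 := \col_l (NN f0 a w l ord0 - (l == a)%:R * c).
have Bv : B0 *m v = 0.
  apply/matrixP => i k; rewrite (ord1 k) [RHS]mxE mxE.
  under eq_bigr do rewrite [v _ _]mxE mulrBr.
  rewrite big_split /= sumrN.
  have -> : \sum_l B0 i l * NN f0 a w l ord0 = (i == a)%:R * c.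
    transitivity ((B0 *m NN f0 a w) i ord0); first by rewrite mxE.
    rewrite -eq0 mxE (bigD1 ord0) //= col0 big1 ?addr0 //.
    move=> l l0; have [U1 _] := UB0; by rewrite U1 ?mulr0 // pos.
  have -> : \sum_l B0 i l * ((l == a)%:R * c) = (i == a)%:R * c.
    by under eq_bigr do rewrite mulrA; rewrite -big_distrl /= sum_indr B0a.
  by rewrite subrr.
have v0 : v = 0 by rewrite -[v](mulKmx (UT_unit UB0)) Bv mulmx0.
have key : forall l, NN f0 a w l ord0 = (l == a)%:R * c.
  move=> l; move/matrixP/(_ l 0): v0; rewrite [v _ _]mxE [RHS]mxE.
  by move/eqP; rewrite subr_eq0 => /eqP.
have w0 : w ord0 = c by move: (key a); rewrite mxE !eqxx mul1r.
have f00 : f0 ord0 = None.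
  case fa: (f0 ord0) => [l|] //.
  case: (l =P a) => [la|nla]; first by move: (nt ord0); rewrite fa la eqxx.
  move: (key l); rewrite mxE (introF eqP nla) mxE fa eqxx mul0r => /eqP.
  by rewrite oner_eq0.
apply: (@finish _ _ D (E *m B0) f0 a w) => //.
- exact: UT_mul.
- move=> j wj wm; case: (j =P ord0) => [->//|/eqP jn0].
  by move: (wm ord0 (pos _ jn0)) c0; rewrite w0 => ->; rewrite eqxx.
- by rewrite mulmxA eD1 -mulmxA eq0 mulmxA.
Qed.

Lemma half_dS n : (n.*2.+1)./2 = n. Proof. by rewrite /= uphalf_double. Qed.
Lemma odd_dS n : odd n.*2.+1. Proof. by rewrite /= odd_double. Qed.

Lemma matching_aj (F : fieldType) m (f : 'I_m -> option 'I_m) :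
  matching f -> almost_jordan (Mf F f).
Proof.
move=> [P2 P3].
pose S := [set j | f j != None].
pose T := [set a | [exists j, f j == Some a]].
pose U := ~: (S :|: T).
pose r := #|S|.
pose sS := enum S. pose sU := enum U.
have szS : size sS = r by rewrite -cardE.
have TnS : forall a, a \in T -> f a = None.
  by move=> a; rewrite inE => /existsP [j /eqP fj]; exact: P2 fj.
have ST : T = [set odflt j (f j) | j in S].
  apply/setP => a; apply/idP/idP.
    rewrite inE => /existsP [j /eqP fj]; apply/imsetP; exists j; by rewrite ?inE ?fj.
  case/imsetP => j; rewrite inE => fj ->; rewrite inE; apply/existsP; exists j.
  by case: (f j) fj.
have cT : #|T| = r.
  rewrite ST card_in_imset // => i j; rewrite !inE.
  case fi: (f i) => [a|] //; case fj: (f j) => [b|] // _ _ /= ab.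
  by apply: P3 fi _; rewrite fj ab.
have dST : S :&: T = set0.
  apply/setP => x; rewrite !inE; case fx: (f x) => [a|] //=.
  apply/negbTE/existsPn => j; apply/eqP => fj; by move: (P2 _ _ fj); rewrite fx.
have cU : (r.*2 + #|U|)%N = m.
  by have := cardsC (S :|: T); rewrite cardsU dST cards0 subn0 cT addnn card_ord.
have r2m : (r.*2 <= m)%N by rewrite -cU leq_addr.
have szU : size sU = #|U| by rewrite -cardE.
have inS : forall k d, (k < r)%N -> nth d sS k \in S.
  by move=> k d kr; rewrite -mem_enum mem_nth // szS.
have inU : forall k d, (k < #|U|)%N -> nth d sU k \in U.
  by move=> k d kr; rewrite -[_ \in U]mem_enum mem_nth // szU.
have SnT : forall x, x \in S -> x \in T -> False.
  by move=> x; rewrite inE => /eqP + /TnS.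
have UnS : forall x, x \in U -> x \in S -> False.
  by move=> x; rewrite !inE => /norP [/negP].
have UnT : forall x, x \in U -> x \in T -> False.
  by move=> x; rewrite !inE => /norP [_ /negP].
have tgtT : forall j a, f j = Some a -> a \in T.
  by move=> j a fj; rewrite inE; apply/existsP; exists j; rewrite fj.
have srcS : forall j a, f j = Some a -> j \in S.
  by move=> j a fj; rewrite inE fj.
pose g := fun p : 'I_m => if (p < r.*2)%N then
   (let j := nth p sS p./2 in if odd p then j else odflt p (f j))
   else nth p sU (p - r.*2)%N.
have srcv : forall x, x \in S -> exists a, f x = Some a.
  by move=> x; rewrite inE; case: (f x) => [a|] // _; exists a.
have hr : forall p : 'I_m, (p < r.*2)%N -> (p./2 < size sS)%N.
  by move=> p pr; rewrite szS ltn_half_double.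
have hr' : forall p : 'I_m, (p < r.*2)%N -> (p./2 < r)%N.
  by move=> p; rewrite ltn_half_double.
have hu : forall p : 'I_m, (r.*2 <= p)%N -> (p - r.*2 < size sU)%N.
  by move=> p pr; rewrite szU ltn_subLR // cU.
have gcls : forall p : 'I_m,
    if (p < r.*2)%N then (if odd p then g p \in S else g p \in T) else g p \in U.
  move=> p; rewrite /g; case pr: (p < r.*2)%N; last first.
    by apply: inU; rewrite -szU hu // leqNgt pr.
  case po: (odd p) => /=; first exact: inS (hr' _ pr).
  have /srcv [a fa] := inS _ p (hr' _ pr); rewrite fa /=; exact: tgtT fa.
have ginj : injective g.
  move=> p q e; apply/val_inj.
  have cp := gcls p; have cq := gcls q.
  case: (ltnP p r.*2) cp => pr cp; case: (ltnP q r.*2) cq => qr cq.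
  - move: e cp cq; rewrite /g pr qr.
    case: (boolP (odd p)) => op; case: (boolP (odd q)) => oq /= e cp cq.
    + move: e; rewrite (set_nth_default q) ?hr // => /eqP.
      rewrite nth_uniq ?hr ?enum_uniq // => /eqP hp.
      by rewrite -[val p]odd_double_half -[val q]odd_double_half op oq hp.
    + by rewrite e in cp; case: (SnT _ cp cq).
    + by rewrite e in cp; case: (SnT _ cq cp).
    + have /srcv [a fa] := inS _ q (hr' _ pr).
      have /srcv [b fb] := inS _ q (hr' _ qr).
      move: e; rewrite (set_nth_default q) ?hr // fa fb /= => eab.
      move: (P3 _ _ _ fa (etrans fb (congr1 Some (esym eab)))) => /eqP.
      rewrite nth_uniq ?hr ?enum_uniq // => /eqP hp.
      by rewrite -[val p]odd_double_half -[val q]odd_double_half (negbTE op) (negbTE oq) hp.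
  - rewrite e in cp; move: cp; case: ifP => _ cp; [case: (UnS _ cq cp) | case: (UnT _ cq cp)].
  - rewrite e in cp; move: cq; case: ifP => _ cq; [case: (UnS _ cp cq) | case: (UnT _ cp cq)].
  - move: e; rewrite /g ltnNge pr ltnNge qr /= (set_nth_default q) ?hu // => /eqP.
    rewrite nth_uniq ?hu ?enum_uniq // => /eqP hpq.
    by rewrite -(subnK pr) hpq subnK.
pose tau := perm ginj.
exists tau^-1%g.
have Pinv : invmx (perm_mx tau^-1%g) = perm_mx tau :> 'M[F]_m.
  have e1 : perm_mx tau^-1%g *m perm_mx tau = 1%:M :> 'M[F]_m.
    by rewrite -perm_mxM mulVg perm_mx1.
  by rewrite -[RHS](mulKmx (unitmx_perm _ tau^-1%g)) e1 mulmx1.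
rewrite Pinv -row_permE.
have -> : row_perm tau (Mf F f) *m perm_mx tau^-1%g = col_perm tau (row_perm tau (Mf F f)).
  by rewrite col_permE.
have gS : forall p : 'I_m, (p < r.*2)%N -> odd p -> g p = nth p sS p./2.
  by move=> p pr op; rewrite /g pr op.
have gT : forall p : 'I_m, (p < r.*2)%N -> ~~ odd p -> g p = odflt p (f (nth p sS p./2)).
  by move=> p pr op; rewrite /g pr (negbTE op).
exists (nseq r 2 ++ nseq (m - r.*2) 1)%N; split.
- by rewrite all_cat !all_nseq /= !orbT.
- by rewrite sumn_cat !sumn_nseq mul1n mul2n subnKC.
apply/matrixP => i j; rewrite !mxE !permE.
congr (if _ then _ else _); apply/eqP/existsP.
  move=> fe.
  have gjS : g j \in S by rewrite inE fe.
  have [jr oj] : (j < r.*2)%N /\ odd j.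
    case: (ltnP j r.*2) (gcls j) => jr; last by move=> c; case: (UnS _ c gjS).
    by case oj: (odd j) => c //; case: (SnT _ gjS c).
  pose k := j./2.
  have kr : (k < r)%N by exact: hr'.
  have ji : val j = k.*2.+1 by rewrite -[val j]odd_double_half oj.
  have km : (k.*2 < m)%N.
    by have := ltn_ord j; rewrite -[nat_of_ord j]/(val j) ji => /ltnW.
  pose i' := Ordinal km.
  have gi' : g i' = odflt i' (f (nth j sS k)).
    rewrite gT /= ?ltn_double ?odd_double // doubleK.
    by rewrite (set_nth_default j) // szS.
  have ii' : i = i'.
    apply: (ginj i i'); rewrite gi' -(gS _ jr oj) fe //.
  have ks : (k < size (nseq r 2 ++ nseq (m - r.*2) 1))%N.
    by rewrite size_cat !size_nseq (leq_trans kr) ?leq_addr.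
  exists (Ordinal ks) => /=.
  rewrite nth_cat size_nseq kr nth_nseq kr eqxx /=.
  rewrite take_cat size_nseq kr (take_nseq _ (ltnW kr)) sumn_nseq mul2n.
  by apply/andP; split; apply/eqP; rewrite ii' // ji.
case=> k /and3P [/eqP nk /eqP sk /eqP jk].
have kr : (k < r)%N.
  move: nk; rewrite nth_cat size_nseq !nth_nseq; case: ifP => // _; by case: ifP.
move: sk; rewrite take_cat size_nseq kr (take_nseq _ (ltnW kr)) sumn_nseq mul2n => ival.
have jr : (j < r.*2)%N by rewrite jk -ival -ltn_half_double half_dS.
have oj : odd j by rewrite jk -ival odd_dS.
have jk2 : j./2 = k by rewrite jk -ival half_dS.
have ir : (i < r.*2)%N by rewrite -ival ltn_double.
have oi : ~~ odd i by rewrite -ival odd_double.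
have ik2 : i./2 = k by rewrite -ival doubleK.
rewrite (gS _ jr oj) (gT _ ir oi) jk2 ik2 (set_nth_default j) ?szS //.
have /srcv [a fa] := inS k j kr.
by rewrite fa.
Qed.

Unset Implicit Arguments.

Theorem theorem1p2 (F : fieldType) (m : nat) (D : 'M[F]_m) :
  differential D ->
  exists (Dbar B : 'M[F]_m),
    [/\ differential Dbar, almost_jordan Dbar, triangular B &
        D = B *m Dbar *m invmx B].
Proof.
move=> DD; have [B [f [UB mf eB]]] := main_ex DD.
exists (Mf F f), B; split.
- exact: Mf_sq.
- exact: matching_aj.
- by split; [case: UB | exact: UT_unit].
- by rewrite -eB mulmxK // UT_unit.
Qed.
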